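(* Let $n\ge3$, $m\ge1$. Every superderivation (even or odd) $D$ of the Lie superalgebra $L^{n,m}$ is a derivation of the underlying Lie algebra of $L^{n,m}$ (i.e., of the vector space $L^{n,m}$ with the same bracket, which is antisymmetric and satisfies the ordinary Jacobi identity), namely $D([a,b])=[D(a),b]+[a,D(b)]$ for all $a,b$. In particular every odd superderivation $D$ satisfies $x_1\notin$ the support of $D(y_1)$, i.e. the $x_1$-coordinate of $D(y_1)$ is $0$.
   Context: $L^{n,m}$ has even basis $x_1,\dots,x_n$ and odd basis $y_1,\dots,y_m$, with only nonzero brackets $[x_1,x_i]=-[x_i,x_1]=x_{i+1}$ ($2\le i\le n-1$) and $[x_1,y_j]=-[y_j,x_1]=y_{j+1}$ ($1\le j\le m-1$). A superderivation of degree $s\in\mathbb{Z}_2$ of a Lie superalgebra $L$ is a linear map $D$ with $D(L_{\bar i})\subset L_{\bar i+s}$ and $D([a,b])=[D(a),b]+(-1)^{s|a|}[a,D(b)]$ for homogeneous $a,b$. *)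

(* Defs.v *)
From HB Require Import structures.
From mathcomp Require Import all_boot all_order all_algebra.
Set Implicit Arguments. Unset Strict Implicit. Unset Printing Implicit Defensive.
Import Order.TTheory GRing.Theory.
Local Open Scope ring_scope.

(* The Lie superalgebra L^{n,m} over a field K, realized on the vector space
   K^n x K^m : an element a is the pair (a.1, a.2), where a.1 holds the
   coordinates on the even basis x_1..x_n (0-based: x_(i+1) <-> index i)
   and a.2 holds the coordinates on the odd basis y_1..y_m. *)
Definition Lnm (K : fieldType) (n m : nat) := ('rV[K]_n * 'rV[K]_m)%type.

Definition coord_at (K : fieldType) (n : nat) (u : 'rV[K]_n) (k : nat) : K :=
  if insub k is Some i then u 0 i else 0.

Definition basis_vec (K : fieldType) (n : nat) (k : nat) : 'rV[K]_n :=
  \row_(i < n) (nat_of_ord i == k)%:R.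

(* basis elements x_i and y_j (1-based, as in the paper) *)
Definition xb (K : fieldType) (n m i : nat) : Lnm K n m := (basis_vec K n i.-1, 0).
Definition yb (K : fieldType) (n m j : nat) : Lnm K n m := (0, basis_vec K m j.-1).

(* The bracket: bilinear extension of [x_1,x_i] = -[x_i,x_1] = x_(i+1)
   (2 <= i <= n-1), [x_1,y_j] = -[y_j,x_1] = y_(j+1) (1 <= j <= m-1),
   all other brackets of basis elements zero. *)
Definition brk (K : fieldType) (n m : nat) (a b : Lnm K n m) : Lnm K n m :=
  (\row_(k < n) (if (2 <= k)%N then
                   coord_at a.1 0 * coord_at b.1 k.-1 - coord_at b.1 0 * coord_at a.1 k.-1
                 else 0),
   \row_(k < m) (if (1 <= k)%N then
                   coord_at a.1 0 * coord_at b.2 k.-1 - coord_at b.1 0 * coord_at a.2 k.-1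
                 else 0)).

(* homogeneous elements: degree false = even (in L_0), true = odd (in L_1) *)
Definition homog (K : fieldType) (n m : nat) (p : bool) (a : Lnm K n m) : Prop :=
  if p then a.1 = 0 else a.2 = 0.

Definition superderivation (K : fieldType) (n m : nat) (s : bool)
    (D : Lnm K n m -> Lnm K n m) : Prop :=
  [/\ linear D,
      (forall (p : bool) (a : Lnm K n m), homog p a -> homog (p (+) s) (D a))
    & (forall (p q : bool) (a b : Lnm K n m), homog p a -> homog q b ->
         D (brk a b) = brk (D a) b + (-1) ^+ (s && p) *: brk a (D b))].

(* Main.v *)
Require Import Defs.
From HB Require Import structures.
From mathcomp Require Import all_boot all_order all_algebra.
From mathcomp Require Import ring.
Import GRing.Theory.
Local Open Scope ring_scope.

Section H.
Variables (K : fieldType) (n m : nat).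
Implicit Types a b c : Lnm K n m.

Lemma pairE' a b : a.1 = b.1 -> a.2 = b.2 -> a = b.
Proof. by case: a; case: b => ? ? ? ? /= -> ->. Qed.

Lemma coordD k (N : nat) (u v : 'rV[K]_N) : coord_at (u + v) k = coord_at u k + coord_at v k.
Proof. by rewrite /coord_at; case: insub => [i|]; rewrite ?mxE ?addr0. Qed.

Lemma coord0 k (N : nat) : coord_at (0 : 'rV[K]_N) k = 0.
Proof. by rewrite /coord_at; case: insub => [i|]; rewrite ?mxE. Qed.

Lemma coordI (N : nat) (u : 'rV[K]_N) k (hk : (k < N)%N) : coord_at u k = u 0 (Ordinal hk).
Proof. by rewrite /coord_at insubT. Qed.

Lemma brkDl a a' b : brk (a + a') b = brk a b + brk a' b.
Proof.
apply: pairE'; apply/rowP => k; rewrite /brk /= !mxE; case: ifP => _;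
  rewrite ?addr0 // !coordD; ring.
Qed.

Lemma brkDr a b b' : brk a (b + b') = brk a b + brk a b'.
Proof.
apply: pairE'; apply/rowP => k; rewrite /brk /= !mxE; case: ifP => _;
  rewrite ?addr0 // !coordD; ring.
Qed.

Lemma brk_odd a c : a.1 = 0 -> coord_at c.1 0 = 0 -> brk a c = 0.
Proof.
move=> ha hc; apply: pairE'; apply/rowP => k; rewrite /brk /= !mxE ha hc coord0;
  case: ifP => _ //; ring.
Qed.

Lemma linD (D : Lnm K n m -> Lnm K n m) : linear D -> forall a b, D (a + b) = D a + D b.
Proof. by move=> hD a b; rewrite -[a in LHS]scale1r hD scale1r. Qed.

Lemma lin0 (D : Lnm K n m -> Lnm K n m) : linear D -> D 0 = 0.
Proof.
move=> hD; have := hD (-1) 0 0; rewrite scaler0 addr0 scaleN1r => ->.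
by rewrite addNr.
Qed.

End H.

Theorem mainTheorem9 (K : fieldType) (n m : nat)
    (hK : [pchar K] =i pred0) (hn : (3 <= n)%N) (hm : (1 <= m)%N)
    (s : bool) (D : Lnm K n m -> Lnm K n m) :
  superderivation s D ->
  (forall a b : Lnm K n m, D (brk a b) = brk (D a) b + brk a (D b)) /\
  (s = true -> coord_at (D (yb K n m 1)).1 0 = 0).
Proof.
case=> hlin hdeg hleib.
have h0 : (0 < n)%N by apply: leq_trans hn.
have h1 : (1 < n)%N by apply: leq_trans hn.
have key : s = true -> forall y : Lnm K n m, y.1 = 0 -> coord_at (D y).1 0 = 0.
  move=> hs y hy; subst s.
  set x2 : Lnm K n m := xb K n m 2.
  have hx2 : homog false x2 by [].
  have hx20 : coord_at x2.1 0 = 0.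
    by rewrite (@coordI _ _ _ _ h0) !mxE.
  have hb : brk x2 y = 0.
    apply: pairE'; apply/rowP => k; rewrite /brk /= !mxE hy hx20 !coord0;
      case: ifP => _ //; rewrite ?mul0r ?mulr0 ?subrr //.
  have := hleib false true x2 y hx2 hy.
  rewrite hb lin0 // /= expr0 scale1r.
  have hDx2 : (D x2).1 = 0 by exact: (hdeg false x2 hx2).
  rewrite (@brk_odd _ _ _ (D x2) y) // ?hy ?coord0 // add0r => E.
  have h2 : (2 < n)%N by [].
  have := congr1 (fun z : Lnm K n m => z.1 0 (Ordinal h2)) E.
  rewrite /brk /= !mxE /=.
  rewrite (@coordI _ _ _ _ h0) (@coordI _ _ _ _ h1) !mxE /=.
  by rewrite (@coordI _ _ (basis_vec K n 1) 1 h1) !mxE /= mul0r sub0r mulr1 => /eqP; rewrite eq_sym oppr_eq0 => /eqP.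
have hom : forall p q a b, homog p a -> homog q b ->
    D (brk a b) = brk (D a) b + brk a (D b).
  move=> p q a b ha hb; rewrite (hleib p q a b ha hb).
  case: s hdeg hleib key => hdeg hleib key; last by rewrite /= scale1r.
  case: p ha => ha /=; last by rewrite expr0 scale1r.
  rewrite expr1 scaleN1r.
  have -> : brk a (D b) = 0.
    apply: brk_odd => //; case: q hb => hb; first by apply: key.
    by have := hdeg false b hb; rewrite /homog /= => ->; rewrite coord0.
  by rewrite oppr0.
split; last by move=> hs; apply: key.
move=> a b.
have ea : a = (a.1, 0) + (0, a.2) by apply: pairE'; rewrite /= ?addr0 ?add0r.
have eb : b = (b.1, 0) + (0, b.2) by apply: pairE'; rewrite /= ?addr0 ?add0r.
rewrite ea eb !brkDl !brkDr !(@linD _ _ _ _ hlin) !brkDl !brkDr.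
rewrite (hom false false) // (hom false true) // (hom true false) // (hom true true) //.
set t1 := brk _ _; set t2 := brk _ _; set t3 := brk _ _; set t4 := brk _ _;
set t5 := brk _ _; set t6 := brk _ _; set t7 := brk _ _; set t8 := brk _ _.
by rewrite (addrACA t1 t2 t3 t4) (addrACA t5 t6 t7 t8) (addrACA (t1+t3)) (addrACA t1 t3 t5 t7).
Qed.
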